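(* Let $\Gamma$ be a finite simplicial graph with vertex set $V=\{a_0,\ldots,a_{n-1}\}$. Every $w\in A(\Gamma)$ admits a unique canonical expression.
   Context: $A(\Gamma)=\langle V\mid[a,b]=1\text{ for }\{a,b\}\in E(\Gamma)\rangle$. The word length $\|w\|$ is the least $\ell\ge0$ with $w=s_1^{e_1}\cdots s_\ell^{e_\ell}$, $s_i\in V$, $e_i\in\{\pm1\}$. For a word $w=s_1^{e_1}\cdots s_\ell^{e_\ell}$ with $\ell=\|w\|$, $s_i\in V$, $e_i\in\{\pm1\}$, its right-counting vector $(f_1,\ldots,f_\ell)$ is given by $f_i=\min\|y\|$, the minimum over $y\in A(\Gamma)$ such that $s_i^{e_i}s_{i+1}^{e_{i+1}}\cdots s_\ell^{e_\ell}=x\,s_i^{e_i}\,y$ for some $x\in\langle \mathrm{lk}_\Gamma(s_i)\rangle$, where $\mathrm{lk}_\Gamma(s)$ is the set of vertices adjacent to $s$. Such a word is a canonical expression for $w$ if (A) $f_1\ge f_2\ge\cdots\ge f_\ell$, and (B) whenever $f_i=f_j$ with $i<j$ and $s_i=a_p$, $s_j=a_q$, we have $p<q$ and $[a_p,a_q]=1$. Uniqueness is as a word (sequence of letters $s_i^{e_i}$). *)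

(* Defs.v *)
From Stdlib Require Import Relations.
From mathcomp Require Import all_boot.
Set Implicit Arguments. Unset Strict Implicit. Unset Printing Implicit Defensive.

(* Right-angled Artin group A(Gamma) on vertices a_0..a_{n-1} = 'I_n,
   graph given by an edge relation e (symmetric, irreflexive).
   A letter (v, b) stands for a_v^{+1} if b = false and a_v^{-1} if b = true.
   Elements of A(Gamma) are words modulo the congruence generated by free
   cancellation and the commutations [a,b] = 1 for edges {a,b}. *)

Definition letter (n : nat) := ('I_n * bool)%type.
Definition word (n : nat) := seq (letter n).

Definition inv_letter n (x : letter n) : letter n := (x.1, ~~ x.2).

Inductive raag_step n (e : rel 'I_n) : word n -> word n -> Prop :=
| step_cancel (u v : word n) (x : letter n) :
    raag_step e (u ++ x :: inv_letter x :: v) (u ++ v)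
| step_comm (u v : word n) (x y : letter n) :
    e x.1 y.1 -> raag_step e (u ++ x :: y :: v) (u ++ y :: x :: v).

Definition raag_eq n (e : rel 'I_n) : relation (word n) :=
  clos_refl_sym_trans (word n) (@raag_step n e).

Definition is_min (P : nat -> Prop) (k : nat) : Prop :=
  P k /\ forall m, P m -> k <= m.

Definition geodesic n (e : rel 'I_n) (c : word n) : Prop :=
  forall d, raag_eq e d c -> size c <= size d.

(* the word x lies in the subgroup <lk(s)> (every element of that subgroup is
   represented by a word in the letters of lk(s) and their inverses) *)
Definition link_word n (e : rel 'I_n) (s : 'I_n) (x : word n) : Prop :=
  all (fun l : letter n => e s l.1) x.

(* f_i for the word c at position i (0-based):
   min ||y|| over y with s_i^{e_i} ... s_l^{e_l} = x s_i^{e_i} y, x in <lk(s_i)>.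
   Since ||y|| is the least length of a word representing y, this is the least
   size of a word y with that property. *)
Definition rc_entry n (e : rel 'I_n) (c : word n) (x0 : letter n) (i : nat)
  (k : nat) : Prop :=
  is_min (fun m => exists x y : word n,
             [/\ link_word e (nth x0 c i).1 x, size y = m &
                 raag_eq e (drop i c) (x ++ nth x0 c i :: y)]) k.

Definition rc_vector n (e : rel 'I_n) (c : word n) (f : seq nat) : Prop :=
  size f = size c /\
  forall x0 i, i < size c -> rc_entry e c x0 i (nth 0 f i).

Definition canonical_expr n (e : rel 'I_n) (w c : word n) : Prop :=
  raag_eq e c w /\ geodesic e c /\
  exists f : seq nat, rc_vector e c f /\
    (forall i j, i < j < size c -> nth 0 f j <= nth 0 f i) /\
    (forall x0 i j, i < j < size c -> nth 0 f i = nth 0 f j ->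
        ((nth x0 c i).1 < (nth x0 c j).1)%N && e (nth x0 c i).1 (nth x0 c j).1).

(* Main.v *)
Require Import Defs.
From Stdlib Require Import Relations.
From mathcomp Require Import all_boot zify.
Set Implicit Arguments. Unset Strict Implicit. Unset Printing Implicit Defensive.

Lemma K_le (a b p q m : nat) : p < m -> q < m -> a * m + (m - p) <= b * m + (m - q) -> a < b \/ (a = b /\ q <= p).
Proof. move=> h1 h2 h3. nia. Qed.

Lemma exists_max (T : eqType) (s : seq T) (K : T -> nat) : s != [::] ->
  exists2 t, t \in s & forall t', t' \in s -> K t' <= K t.
Proof.
elim: s => [|x s IH] // _.
case: s IH => [|x' s] IH.
  by exists x => [|t']; rewrite ?inE ?eqxx // => /eqP ->.
have [t ht hmax] := IH isT.
case: (leqP (K x) (K t)) => hxy.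
  exists t; first by rewrite inE ht orbT.
  by move=> t'; rewrite inE => /orP [/eqP ->|/hmax].
exists x; first by rewrite inE eqxx.
move=> t'; rewrite inE => /orP [/eqP -> //|/hmax h]; exact: leq_trans h (ltnW hxy).
Qed.

Section RA.
Variables (n : nat) (e : rel 'I_n).
Hypothesis e_sym : symmetric e.
Hypothesis e_irr : irreflexive e.
Implicit Types (x y z : letter n) (w u v s Q R W : word n) (p q a b : 'I_n).

Definition dep (a b : 'I_n) := (a == b) || ~~ e a b.

Fixpoint act (x : letter n) (w : word n) : word n :=
  match w with
  | [::] => [:: x]
  | y :: w' => if y == inv_letter x then w'
               else if e x.1 y.1 then y :: act x w' else x :: y :: w'
  end.

Fixpoint canc (x : letter n) (w : word n) : bool :=
  match w with
  | [::] => false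
  | y :: w' => (y == inv_letter x) || (e x.1 y.1 && canc x w')
  end.

Fixpoint reduced (w : word n) : bool :=
  match w with
  | [::] => true
  | x :: w' => ~~ canc x w' && reduced w'
  end.

Definition filt (p q : 'I_n) (w : word n) := [seq l <- w | (l.1 == p) || (l.1 == q)].
Definition phieq (w w' : word n) := forall p q, dep p q -> filt p q w = filt p q w'.
Definition NF (w : word n) := foldr act [::] w.

Lemma invK (x : letter n) : inv_letter (inv_letter x) = x.
Proof. by case: x => a b; rewrite /inv_letter /= negbK. Qed.

Lemma dep_sym a b : dep a b = dep b a.
Proof. by rewrite /dep eq_sym e_sym. Qed.
Lemma dep_refl a : dep a a.
Proof. by rewrite /dep eqxx. Qed.
Lemma e_neq a b : e a b -> a != b.
Proof. by move=> h; apply/eqP=> E; rewrite E e_irr in h. Qed.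
Lemma e_ndep a b : e a b -> dep a b = false.
Proof. by move=> h; rewrite /dep h (negbTE (e_neq h)). Qed.
Lemma ndep_e a b : dep a b = false -> e a b.
Proof. by rewrite /dep; case/norP => _ /negbNE. Qed.

Lemma pairv p q a b : dep p q -> (a == p) || (a == q) -> e a b -> ((b == p) || (b == q)) = false.
Proof.
move=> hd ha hab; apply/negbTE/negP => hb.
case/orP: ha => /eqP ha; subst a; case/orP: hb => /eqP hb; subst b.
- by rewrite e_irr in hab.
- by rewrite /dep hab orbF in hd; move/eqP: hd => E; subst q; rewrite e_irr in hab.
- by rewrite /dep e_sym hab orbF in hd; move/eqP: hd => E; subst q; rewrite e_irr in hab.
- by rewrite e_irr in hab.
Qed.

Lemma filt_act p q x w : dep p q ->
  filt p q (act x w) = if (x.1 == p) || (x.1 == q) then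
     (if canc x w then behead (filt p q w) else x :: filt p q w) else filt p q w.
Proof.
move=> hd; elim: w => [|y w IH] /=.
  by rewrite /filt /=; case: ifP.
case: eqP => [Hy|Hy].
  by subst y; rewrite /filt /=; case: ((x.1 == p) || (x.1 == q)).
case: ifP => He /=.
  rewrite /filt /= -/(filt p q (act x w)) -/(filt p q w) IH.
  case hx: ((x.1 == p) || (x.1 == q)).
    by rewrite (pairv hd hx He).
  by case: ((y.1 == p) || (y.1 == q)).
by rewrite /filt /=; case: ((x.1 == p) || (x.1 == q)).
Qed.

Lemma canc_char x w : canc x w = [forall b, dep x.1 b ==> (ohead (filt x.1 b w) == Some (inv_letter x))].
Proof.
elim: w => [|y w IH] /=.
  apply/esym/negbTE/negP => /forallP /(_ x.1); by rewrite dep_refl.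
case: eqP => [Hy|Hy] /=.
  subst y; apply/esym/forallP => b; apply/implyP => _.
  rewrite /filt /=; case: ifP => [_|]; first by rewrite /= eqxx. by rewrite eqxx.
case He: (e x.1 y.1) => /=.
  rewrite IH; apply: eq_forallb => b; case hb: (dep x.1 b) => //=.
  rewrite /filt /=.
  have -> : (y.1 == x.1) || (y.1 == b) = false.
    by apply: (pairv (a:=x.1) hb); rewrite ?eqxx.
  by [].
apply/esym/negbTE/negP => /forallP /(_ y.1).
rewrite /dep He orbT /= /filt /= eqxx orbT /=.
by move/eqP => [].
Qed.

Lemma canc_phieq x w w' : phieq w w' -> canc x w = canc x w'.
Proof.
move=> h; rewrite !canc_char; apply: eq_forallb => b.
case hb: (dep x.1 b) => //=; by rewrite h.
Qed.


Lemma phieq_refl w : phieq w w. Proof. by []. Qed.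
Lemma phieq_sym w w' : phieq w w' -> phieq w' w.
Proof. by move=> h p q hd; rewrite h. Qed.
Lemma phieq_trans w1 w2 w3 : phieq w1 w2 -> phieq w2 w3 -> phieq w1 w3.
Proof. by move=> h1 h2 p q hd; rewrite h1 ?h2. Qed.
Lemma phieq_cons z w w' : phieq w w' -> phieq (z :: w) (z :: w').
Proof. by move=> h p q hd; rewrite /filt /= -!/(filt p q _) h. Qed.
Lemma phieq_consK z w w' : phieq (z :: w) (z :: w') -> phieq w w'.
Proof.
move=> h p q hd; move: (h p q hd); rewrite /filt /= -!/(filt p q _).
by case: ifP => // _ [].
Qed.
Lemma phieq_catl s w w' : phieq w w' -> phieq (s ++ w) (s ++ w').
Proof. by move=> h p q hd; rewrite /filt !filter_cat -!/(filt p q _) h. Qed.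

Lemma act_phieq x w w' : phieq w w' -> phieq (act x w) (act x w').
Proof.
move=> h p q hd; rewrite !filt_act // (canc_phieq x h) h //.
Qed.

Lemma act_nocanc x w : ~~ canc x w -> phieq (act x w) (x :: w).
Proof.
move=> h p q hd; rewrite filt_act // (negbTE h) /filt /=.
by case: ifP.
Qed.

Lemma canc_act_other x y w : e x.1 y.1 -> canc x (act y w) = canc x w.
Proof.
move=> hxy; rewrite !canc_char; apply: eq_forallb => b.
case hb: (dep x.1 b) => //=.
rewrite filt_act //.
have -> : (y.1 == x.1) || (y.1 == b) = false.
  by apply: (pairv (a:=x.1) hb); rewrite ?eqxx.
by [].
Qed.

Lemma act_comm x y w : e x.1 y.1 -> phieq (act x (act y w)) (act y (act x w)).
Proof.
move=> hxy p q hd; rewrite !filt_act //.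
case hx: ((x.1 == p) || (x.1 == q)).
  rewrite (pairv hd hx hxy) canc_act_other //.
case hy: ((y.1 == p) || (y.1 == q)) => //.
rewrite canc_act_other // e_sym //.
Qed.

Lemma size_act x w : size (act x w) = if canc x w then (size w).-1 else (size w).+1.
Proof.
elim: w => [|y w IH] //=.
case: eqP => //= _; case: ifP => //= _.
rewrite IH; case hc: (canc x w) => //.
by case: w hc {IH}.
Qed.

Lemma canc_decomp x w : canc x w -> exists Q R,
  [/\ w = Q ++ inv_letter x :: R, all (fun l : letter n => e x.1 l.1) Q & act x w = Q ++ R].
Proof.
elim: w => [|y w IH] //=.
case: eqP => [->|Hy] /=.
  by move=> _; exists [::], w.
case He: (e x.1 y.1) => //= /IH [Q [R [h1 h2 h3]]].
exists (y :: Q), R; split; [by rewrite h1 | by rewrite /= He h2 | by rewrite h3].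
Qed.

Lemma act_pass x Q R : all (fun l : letter n => e x.1 l.1) Q -> act x (Q ++ R) = Q ++ act x R.
Proof.
elim: Q => [|y Q IH] //= /andP [hy hQ].
have -> : (y == inv_letter x) = false.
  apply/negbTE/negP => /eqP E; subst y; by rewrite e_irr in hy.
by rewrite hy IH.
Qed.

Lemma canc_pass x Q R : all (fun l : letter n => e x.1 l.1) Q -> canc x (Q ++ R) = canc x R.
Proof.
elim: Q => [|y Q IH] //= /andP [hy hQ].
have -> : (y == inv_letter x) = false.
  apply/negbTE/negP => /eqP E; subst y; by rewrite e_irr in hy.
by rewrite hy IH.
Qed.

Lemma act_adj z Q R : all (fun l : letter n => e z.1 l.1) Q ->
  canc (inv_letter z) (Q ++ z :: R) /\ act (inv_letter z) (Q ++ z :: R) = Q ++ R.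
Proof.
move=> h; rewrite canc_pass // act_pass //= invK eqxx //.
Qed.

Lemma filt_nil p q z Q : dep p q -> (z.1 == p) || (z.1 == q) ->
  all (fun l : letter n => e z.1 l.1) Q -> filt p q Q = [::].
Proof.
move=> hd hz; elim: Q => [|y Q IH] //= /andP [hy hQ].
by rewrite /filt /= (pairv hd hz hy) -/(filt p q Q) IH.
Qed.

Lemma phieq_move z Q R : all (fun l : letter n => e z.1 l.1) Q ->
  phieq (Q ++ z :: R) (z :: Q ++ R).
Proof.
move=> h p q hd; rewrite /filt /= !filter_cat /= -!/(filt p q _).
case hz: ((z.1 == p) || (z.1 == q)) => //.
by rewrite (filt_nil hd hz h).
Qed.

Lemma reduced_cat Q R : reduced (Q ++ R) -> reduced R.
Proof. by elim: Q => //= y Q IH /andP [_ /IH]. Qed.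

Lemma act_inv x w : reduced w -> phieq (act (inv_letter x) (act x w)) w.
Proof.
move=> hr; case hc: (canc x w).
  have [Q [R [h1 h2 h3]]] := canc_decomp hc.
  rewrite h3 act_pass //.
  have hR : reduced (inv_letter x :: R) by apply: (@reduced_cat Q); rewrite -h1.
  move: hR => /= /andP [hR _].
  rewrite h1; apply: phieq_catl; exact: act_nocanc.
apply: phieq_trans (act_phieq _ (act_nocanc (negbT hc))) _.
by rewrite /= invK eqxx.
Qed.

Lemma reduced_act x w : reduced w -> reduced (act x w).
Proof.
elim: w => [|y w IH] //= /andP [hc hr].
case: eqP => // Hy.
case: ifP => He /=.
  rewrite canc_act_other; last by rewrite e_sym.
  by rewrite hc IH.
have -> : (y == inv_letter x) = false by apply/eqP.
by rewrite He hc hr.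
Qed.

Lemma NF_reduced w : reduced (NF w).
Proof. elim: w => //= x w IH; exact: reduced_act. Qed.

Lemma foldr_phieq u W W' : phieq W W' -> phieq (foldr act W u) (foldr act W' u).
Proof. elim: u => //= x u IH h; apply: act_phieq; exact: IH. Qed.

Lemma NF_cat u v : NF (u ++ v) = foldr act (NF v) u.
Proof. by rewrite /NF foldr_cat. Qed.

Lemma NF_step u v : raag_step e u v -> phieq (NF u) (NF v).
Proof.
case=> {u v} [u v x|u v x y hxy]; rewrite !NF_cat; apply: foldr_phieq => /=.
  have := act_inv (inv_letter x) (NF_reduced v); by rewrite invK.
exact: act_comm.
Qed.

Lemma NF_raag u v : raag_eq e u v -> phieq (NF u) (NF v).
Proof.
elim=> {u v} [u v /NF_step //|u|u v _ /phieq_sym //|u v w _ h1 _ h2].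
  by [].
exact: phieq_trans h1 h2.
Qed.

Lemma NF_red u : reduced u -> phieq (NF u) u.
Proof.
elim: u => //= x u IH /andP [hc hr].
apply: phieq_trans (act_phieq _ (IH hr)) _; exact: act_nocanc.
Qed.

Lemma phieq_size w w' : phieq w w' -> size w = size w'.
Proof.
move=> h; apply: perm_size; apply/allP => z _.
have key : forall s : word n, count_mem z s = count_mem z (filt z.1 z.1 s).
  move=> s; rewrite /filt count_filter; apply: eq_count => l /=.
  by case: eqP => //= ->; rewrite eqxx.
by rewrite /= (key w) (key w') h ?dep_refl.
Qed.

Lemma NF_size_le u : size (NF u) <= size u.
Proof.
elim: u => //= x u IH; rewrite size_act; case: (canc x _) => //.
  by apply: leq_trans (leq_pred _) _; apply: leq_trans IH _.
Qed.

Lemma NF_size_lt u : ~~ reduced u -> size (NF u) < size u.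
Proof.
elim: u => //= x u IH; rewrite negb_and negbK => h.
case hr: (reduced u).
  rewrite hr orbF in h.
  rewrite size_act (canc_phieq x (NF_red hr)) h (phieq_size (NF_red hr)).
  case: (size u) => //.
have := IH (negbT hr); rewrite size_act; case: (canc x _) => /=.
  by move=> h2; apply: leq_trans (leq_pred _) _; apply: ltnW.
by [].
Qed.


Lemma raag_catl s (a b : word n) : raag_eq e a b -> raag_eq e (s ++ a) (s ++ b).
Proof.
elim=> {a b} [a b st|a|a b _ IH|a b c _ IH1 _ IH2].
- apply: rst_step; case: st => [u v x|u v x y h]; rewrite !catA; by constructor.
- exact: rst_refl.
- exact: rst_sym.
- exact: rst_trans IH1 IH2.
Qed.

Lemma act_raag x w : raag_eq e (act x w) (x :: w).
Proof.
elim: w => [|y w IH] /=; first exact: rst_refl.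
case: eqP => [->|_].
  by apply: rst_sym; apply: rst_step; apply: (@step_cancel _ _ [::] w x).
case: ifP => h; last exact: rst_refl.
apply: rst_trans (_ : raag_eq e _ (y :: x :: w)) _.
  exact: (raag_catl [:: y] IH).
apply: rst_step; apply: (@step_comm _ _ [::] w y x); by rewrite e_sym.
Qed.

Lemma NF_raag_eq u : raag_eq e (NF u) u.
Proof.
elim: u => [|x u IH] /=; first exact: rst_refl.
apply: rst_trans (act_raag _ _) _; exact: (raag_catl [:: x] IH).
Qed.

Lemma geodesic_reduced c : geodesic e c -> reduced c.
Proof.
move=> g; apply/negPn/negP => h.
have h1 := NF_size_lt h; have h2 := g _ (NF_raag_eq c).
by rewrite ltnNge h2 in h1.
Qed.

Lemma reduced_geodesic c : reduced c -> geodesic e c.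
Proof.
move=> r d hd; have h := NF_raag hd.
rewrite -(phieq_size (NF_red r)) -(phieq_size h); exact: NF_size_le.
Qed.

Inductive comm_step : word n -> word n -> Prop :=
| cstep (u v : word n) (x y : letter n) :
    e x.1 y.1 -> comm_step (u ++ x :: y :: v) (u ++ y :: x :: v).
Definition comm_eq := clos_refl_sym_trans (word n) comm_step.

Lemma comm_catl s (a b : word n) : comm_eq a b -> comm_eq (s ++ a) (s ++ b).
Proof.
elim=> {a b} [a b st|a|a b _ IH|a b c _ IH1 _ IH2].
- apply: rst_step; case: st => u v x y h; rewrite !catA; by constructor.
- exact: rst_refl.
- exact: rst_sym.
- exact: rst_trans IH1 IH2.
Qed.

Lemma comm_raag (a b : word n) : comm_eq a b -> raag_eq e a b.
Proof.
elim=> {a b} [a b st|a|a b _ IH|a b c _ IH1 _ IH2].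
- apply: rst_step; case: st => u v x y h; by constructor.
- exact: rst_refl.
- exact: rst_sym.
- exact: rst_trans IH1 IH2.
Qed.

Lemma comm_move z Q R : all (fun l : letter n => e z.1 l.1) Q ->
  comm_eq (Q ++ z :: R) (z :: Q ++ R).
Proof.
elim: Q => [|y Q IH] /=; first by move=> _; exact: rst_refl.
case/andP => hy hQ.
apply: rst_trans (_ : comm_eq _ (y :: z :: Q ++ R)) _.
  exact: (comm_catl [:: y] (IH hQ)).
apply: rst_step; apply: (@cstep [::] (Q ++ R) y z); by rewrite e_sym.
Qed.

Lemma phieq_nil v : phieq [::] v -> v = [::].
Proof.
case: v => // z v h; have := h z.1 z.1 (dep_refl _).
by rewrite /filt /= eqxx.
Qed.

Lemma phieq_comm u v : phieq u v -> comm_eq u v.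
Proof.
elim: u v => [|z u IH] v h.
  rewrite (phieq_nil h); exact: rst_refl.
have hc : canc (inv_letter z) v.
  by rewrite -(canc_phieq _ h) /= invK eqxx.
have [Q [R [h1 h2 _]]] := canc_decomp hc.
rewrite invK in h1; move: h2 => /= h2.
rewrite h1; apply: rst_trans (_ : comm_eq (z :: u) (z :: Q ++ R)) _.
  apply: (comm_catl [:: z]); apply: IH; apply: (@phieq_consK z).
  apply: phieq_trans h _; rewrite h1; exact: phieq_move.
apply: rst_sym; exact: comm_move.
Qed.


Fixpoint ups (D : seq 'I_n) (T : word n) : word n :=
  match T with
  | [::] => [::]
  | z :: T' => if has (dep z.1) D then z :: ups (z.1 :: D) T' else ups D T'
  end.
Fixpoint downs (D : seq 'I_n) (T : word n) : word n :=
  match T with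
  | [::] => [::]
  | z :: T' => if has (dep z.1) D then downs (z.1 :: D) T' else z :: downs D T'
  end.
Fixpoint Dext (D : seq 'I_n) (T : word n) : seq 'I_n :=
  match T with
  | [::] => D
  | z :: T' => if has (dep z.1) D then Dext (z.1 :: D) T' else Dext D T'
  end.

Lemma ups_eqi D1 D2 T : D1 =i D2 -> ups D1 T = ups D2 T.
Proof.
elim: T D1 D2 => [|z T IH] D1 D2 h //=.
rewrite (eq_has_r h); case: ifP => _; last exact: IH.
congr cons; apply: IH => t; by rewrite !inE h.
Qed.

Lemma ups_cat D T1 T2 : ups D (T1 ++ T2) = ups D T1 ++ ups (Dext D T1) T2.
Proof.
elim: T1 D => [|z T1 IH] D //=; case: ifP => _ //=; by rewrite IH.
Qed.

Lemma size_ups_le D T : size (ups D T) <= size T.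
Proof.
elim: T D => [|z T IH] D //=; case: ifP => _ /=; first exact: IH.
exact: leq_trans (IH _) (leqnSn _).
Qed.

Lemma size_ups_mono D1 D2 T : {subset D1 <= D2} -> size (ups D1 T) <= size (ups D2 T).
Proof.
elim: T D1 D2 => [|z T IH] D1 D2 h //=.
case h1: (has (dep z.1) D1).
  have -> : has (dep z.1) D2.
    by case/hasP: h1 => d hd hdep; apply/hasP; exists d => //; apply: h.
  rewrite /= ltnS; apply: IH => t; rewrite !inE; case/orP => [->//|/h ->]; by rewrite orbT.
case: ifP => _ /=; last exact: IH.
apply: leq_trans (IH D1 (z.1 :: D2) _) (leqnSn _).
by move=> t ht; rewrite inE h ?orbT.
Qed.

Lemma Dext_sub D T : {subset D <= Dext D T}.
Proof.
elim: T D => [|z T IH] D //=; case: ifP => _ // t ht; apply: IH.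
by rewrite inE ht orbT.
Qed.

Lemma ups_swap D x y v : e x.1 y.1 ->
  size (ups D (x :: y :: v)) = size (ups D (y :: x :: v)).
Proof.
move=> hxy.
have hyx : dep y.1 x.1 = false by rewrite e_ndep // e_sym.
have hxy' : dep x.1 y.1 = false by rewrite e_ndep.
rewrite /=.
case hx: (has (dep x.1) D); case hy: (has (dep y.1) D); rewrite /= ?hxy' ?hyx ?hx ?hy /=.
- congr (_.+2); congr size; apply: ups_eqi => t; rewrite !inE.
  by case: (t == x.1); case: (t == y.1).
- by [].
- by [].
- by [].
Qed.

Lemma ups_comm D (a b : word n) : comm_eq a b -> size (ups D a) = size (ups D b).
Proof.
elim=> {a b} [a b st|a|a b _ IH|a b c _ IH1 _ IH2] //.
- case: st => u v x y h; rewrite !ups_cat !size_cat; congr addn; exact: ups_swap.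
- by rewrite IH1.
Qed.

Lemma ups_phieq D (a b : word n) : phieq a b -> size (ups D a) = size (ups D b).
Proof. by move/phieq_comm; apply: ups_comm. Qed.

Lemma ups_adj a Q R : all (fun l : letter n => e a l.1) Q -> ups [:: a] (Q ++ R) = ups [:: a] R.
Proof.
elim: Q => [|y Q IH] //= /andP [hy hQ].
have hd : dep y.1 a = false by rewrite e_ndep // e_sym.
by rewrite orbF hd IH.
Qed.

Lemma dep_pq p q a b : dep p q -> (a == p) || (a == q) -> (b == p) || (b == q) -> dep a b.
Proof.
move=> h; case/orP => /eqP ->; case/orP => /eqP ->; rewrite ?dep_refl //.
by rewrite dep_sym.
Qed.

Lemma filt_blocked D T p q : dep p q -> has (fun d => (d == p) || (d == q)) D ->
  filt p q (downs D T) = [::] /\ filt p q (ups D T) = filt p q T.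
Proof.
move=> hd; elim: T D => [|z T IH] D hD //=.
case: ifP => hz.
  have hD' : has (fun d => (d == p) || (d == q)) (z.1 :: D) by rewrite /= hD orbT.
  have [h1 h2] := IH (z.1 :: D) hD'.
  by rewrite /filt /= -!/(filt p q _) h1 h2.
have hz' : ((z.1 == p) || (z.1 == q)) = false.
  apply/negbTE/negP => hzpq; move/negbT: hz => /negP; apply.
  case/hasP: hD => d hdD hdpq; apply/hasP; exists d => //; exact: dep_pq hzpq hdpq.
have [h1 h2] := IH D hD.
by rewrite /filt /= hz' -!/(filt p q _) h1 h2.
Qed.

Lemma filt_split D T p q : dep p q ->
  filt p q T = filt p q (downs D T) ++ filt p q (ups D T).
Proof.
move=> hd; elim: T D => [|z T IH] D //=.
case hz: (has (dep z.1) D); rewrite /filt /= -!/(filt p q _).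
  case hzc: ((z.1 == p) || (z.1 == q)).
    have hD' : has (fun d => (d == p) || (d == q)) (z.1 :: D) by rewrite /= hzc.
    have [h1 h2] := filt_blocked T hd hD'.
    by rewrite h1 h2.
  by rewrite (IH (z.1 :: D)).
rewrite (IH D); by case: ((z.1 == p) || (z.1 == q)).
Qed.

Lemma phieq_split z T : phieq (z :: T) (downs [:: z.1] T ++ z :: ups [:: z.1] T).
Proof.
move=> p q hd; rewrite /filt filter_cat /= -!/(filt p q _).
case hzc: ((z.1 == p) || (z.1 == q)).
  have hD' : has (fun d => (d == p) || (d == q)) [:: z.1] by rewrite /= hzc.
  have [h1 h2] := filt_blocked T hd hD'.
  by rewrite h1 h2.
exact: filt_split.
Qed.

Lemma downs_link D T a : a \in D -> all (fun l : letter n => e a l.1) (downs D T).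
Proof.
elim: T D => [|z T IH] D hD //=.
case: ifP => hz.
  by apply: IH; rewrite inE hD orbT.
rewrite /= IH // andbT.
have : dep z.1 a = false.
  apply/negbTE/negP => hza; move/negbT: hz => /negP; apply; apply/hasP; by exists a.
by move/ndep_e; rewrite e_sym.
Qed.

Lemma ups_block D Q y R : has (dep y.1) (Dext D Q) ->
  (size (ups [:: y.1] R)).+1 <= size (ups D (Q ++ y :: R)).
Proof.
move=> h; rewrite ups_cat size_cat /= h /= addnS ltnS.
apply: leq_trans (leq_addl _ _); apply: size_ups_mono => t; rewrite !inE => ->.
by [].
Qed.


Definition U (c : word n) (i : nat) : nat :=
  if drop i c is z :: T then size (ups [:: z.1] T) else 0.
Definition Up y w := size (ups [:: y.1] (act (inv_letter y) w)).
Definition mv y w := canc (inv_letter y) w.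

Lemma U_drop c i x0 : i < size c -> U c i = size (ups [:: (nth x0 c i).1] (drop i.+1 c)).
Proof. by move=> h; rewrite /U (drop_nth x0 h). Qed.

Lemma U_cons z c j : U (z :: c) j.+1 = U c j.
Proof. by []. Qed.

Lemma U_lt c i j x0 : i < j -> j < size c -> dep (nth x0 c i).1 (nth x0 c j).1 ->
  U c j < U c i.
Proof.
move=> hij hj hdep.
have hi : i < size c by apply: ltn_trans hj.
rewrite (U_drop x0 hi) (U_drop x0 hj).
set k := j - i.+1.
have E : drop i.+1 c = take k (drop i.+1 c) ++ nth x0 c j :: drop j.+1 c.
  rewrite -(drop_nth x0 hj).
  have -> : drop j c = drop k (drop i.+1 c) by rewrite drop_drop /k subnK.
  by rewrite cat_take_drop.
rewrite E; apply: ups_block; apply/hasP; exists (nth x0 c i).1.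
  apply: Dext_sub; by rewrite inE.
by rewrite dep_sym.
Qed.

Lemma Up_phieq y w w' : phieq w w' -> Up y w = Up y w'.
Proof. by move=> h; rewrite /Up; apply: ups_phieq; apply: act_phieq. Qed.
Lemma mv_phieq y w w' : phieq w w' -> mv y w = mv y w'.
Proof. by move=> h; apply: canc_phieq. Qed.

Lemma Up_adj y Q R : all (fun l : letter n => e y.1 l.1) Q ->
  mv y (Q ++ y :: R) /\ Up y (Q ++ y :: R) = size (ups [:: y.1] R).
Proof.
move=> h; have [h1 h2] := act_adj R h; split => //.
by rewrite /Up h2 ups_adj.
Qed.

Lemma mv_front y w : mv y w -> phieq w (y :: act (inv_letter y) w).
Proof.
move=> h; have [Q [R [h1 h2 h3]]] := canc_decomp h.
rewrite invK in h1; rewrite h3 h1; exact: phieq_move.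
Qed.

Lemma mv_mem y w : mv y w -> y \in w.
Proof.
move=> h; have [Q [R [h1 h2 h3]]] := canc_decomp h.
by rewrite invK in h1; rewrite h1 mem_cat inE eqxx orbT.
Qed.

Definition sortedU (c : word n) : Prop :=
  (forall i j, i < j < size c -> U c j <= U c i) /\
  (forall x0 i j, i < j < size c -> U c i = U c j ->
      ((nth x0 c i).1 < (nth x0 c j).1) && e (nth x0 c i).1 (nth x0 c j).1).

Lemma sortedU_cons z c : sortedU (z :: c) -> sortedU c.
Proof.
case=> hA hB; split.
  move=> i j /andP [h1 h2]; rewrite -(U_cons z c i) -(U_cons z c j); apply: hA; by rewrite ltnS h1.
move=> x0 i j /andP [h1 h2] hU; have := hB x0 i.+1 j.+1; rewrite /= ltnS h1 /=.
by apply.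
Qed.

Lemma front_match z c z' c' : phieq (z :: c) (z' :: c') -> z <> z' ->
  exists k, [/\ 0 < k < size (z :: c), nth z (z :: c) k = z' & U (z :: c) k = U (z' :: c') 0].
Proof.
move=> h hne.
have hm : mv z' (z :: c) by rewrite (mv_phieq _ h) /mv /= invK eqxx.
move: hm; rewrite /mv /= invK.
case: eqP => //= _ /andP [hzz hc].
have [Q [R [h1 h2 h3]]] := canc_decomp hc; rewrite invK in h1; move: h2 => /= h2.
exists (size Q).+1; split.
- by rewrite h1 /= size_cat /= ltnS -addSnnS leq_addr.
- by rewrite h1 /= nth_cat ltnn subnn.
- have hadj : all (fun l : letter n => e z'.1 l.1) (z :: Q) by rewrite /= hzz h2.
  have [_ hU] := Up_adj R hadj.
  have hU' : Up z' (z' :: c') = U (z' :: c') 0.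
    by rewrite /Up /= invK eqxx.
  rewrite -hU' -(Up_phieq _ h) h1 -cat_cons hU.
  by rewrite /U /= drop_size_cat.
Qed.

Lemma uniq_sorted c c' : phieq c c' -> sortedU c -> sortedU c' -> c = c'.
Proof.
elim: c c' => [|z c IH] c' h s s'.
  by rewrite (phieq_nil h).
case: c' h s' => [|z' c'] h s'.
  by have := phieq_nil (phieq_sym h).
case: (z =P z') => [E|NE].
  subst z'; congr cons; apply: IH; [exact: phieq_consK h|exact: sortedU_cons s|exact: sortedU_cons s'].
exfalso.
have [k [/andP [hk1 hk2] hk3 hk4]] := front_match h NE.
have NE' : z' <> z by move=> E; apply: NE.
have [k' [/andP [hk1' hk2'] hk3' hk4']] := front_match (phieq_sym h) NE'.
case: s => sA sB; case: s' => sA' sB'.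
have l1 := sA 0 k (introT andP (conj hk1 hk2)).
have l2 := sA' 0 k' (introT andP (conj hk1' hk2')).
have eq1 : U (z :: c) 0 = U (z :: c) k.
  apply/eqP; rewrite eqn_leq l1 /= -hk4' hk4 l2 //.
have eq2 : U (z' :: c') 0 = U (z' :: c') k'.
  apply/eqP; rewrite eqn_leq l2 /= -hk4 hk4' l1 //.
have := sB z 0 k (introT andP (conj hk1 hk2)) eq1.
have := sB' z' 0 k' (introT andP (conj hk1' hk2')) eq2.
rewrite /= hk3 hk3' => /andP [lt1 _] /andP [lt2 _].
by have := ltn_trans lt1 lt2; rewrite ltnn.
Qed.




Lemma exists_sorted (c0 : word n) : exists c, phieq c c0 /\ sortedU c.
Proof.
move: {2}(size c0) (leqnn (size c0)) => m; elim: m c0 => [|m IH] c0 hs.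
  case: c0 hs => // _; exists [::]; split => //; split => [i j|x0 i j] /andP [_];
  by rewrite ltn0.
case: c0 hs => [|z0 c00] hs.
  exists [::]; split => //; split => [i j|x0 i j] /andP [_];
  by rewrite ltn0.
set c0 := z0 :: c00.
set cs := [seq y <- c0 | mv y c0].
have hne : cs != [::].
  have : z0 \in cs by rewrite mem_filter /mv /= invK eqxx /= inE eqxx.
  by case: (cs).
have [y hy hmax] := exists_max (fun y : letter n => Up y c0 * n + (n - y.1)) hne.
move: hy; rewrite mem_filter => /andP [hmv _].
have hmaxU : forall y', mv y' c0 -> Up y' c0 < Up y c0 \/ (Up y' c0 = Up y c0 /\ y.1 <= y'.1).
  move=> y' hy'; apply: K_le (ltn_ord y'.1) (ltn_ord y.1) _.
  apply: hmax; by rewrite mem_filter hy' (mv_mem hy').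
set r := act (inv_letter y) c0.
have hsr : size r <= m.
  rewrite /r size_act -/(mv y c0) hmv; by move: hs; rewrite /c0 /=.
have [c1 [hc1 hs1]] := IH r hsr.
have hph : phieq (y :: c1) c0.
  exact: phieq_trans (phieq_cons y hc1) (phieq_sym (mv_front hmv)).
exists (y :: c1); split => //.
have U0 : U (y :: c1) 0 = Up y c0 by rewrite /U /= (ups_phieq _ hc1).
have U1 : forall z1 c1', c1 = z1 :: c1' -> U (y :: c1) 1 <= U (y :: c1) 0.
  move=> z1 c1' E.
  case hd: (dep y.1 z1.1).
    apply: ltnW; apply: (@U_lt (y :: c1) 0 1 y) => //; by rewrite E.
  have hE := ndep_e hd.
  have hadj : all (fun l : letter n => e z1.1 l.1) [:: y] by rewrite /= e_sym hE.
  have [hm hU] := Up_adj c1' hadj.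
  rewrite /= -E in hm hU.
  rewrite (mv_phieq _ hph) in hm; rewrite (Up_phieq _ hph) in hU.
  rewrite U0; have -> : U (y :: c1) 1 = Up z1 c0 by rewrite hU E.
  by case: (hmaxU z1 hm) => [/ltnW|[-> _]].
have hAll : forall j, 0 < j < size (y :: c1) -> U (y :: c1) j <= U (y :: c1) 0.
  move=> [|j] // /andP [_ hj]; rewrite /= ltnS in hj.
  case: c1 hc1 hs1 hph U0 U1 hj => [|z1 c1'] // hc1 hs1 hph U0 U1 hj.
  apply: leq_trans (U1 _ _ erefl); rewrite U_cons.
  case: j hj => [|j] hj; first by [].
  rewrite (U_cons y (z1 :: c1') 0); by apply: hs1.1; apply/andP; split.
split.
  move=> [|i] [|j] //.
    by move=> h; apply: hAll.
  move=> /andP [hij hj]; rewrite !U_cons; apply: hs1.1; apply/andP; split; move: hij hj => /=; lia.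
move=> x0 [|i] [|j] //; last first.
  move=> /andP [hij hj] hU; apply: hs1.2 => //; apply/andP; split; move: hij hj => /=; lia.
move=> /andP [_ hj] hU; set cj := nth x0 (y :: c1) j.+1.
have hjj : j.+1 < size (y :: c1) by [].
have hE : e y.1 cj.1.
  apply: ndep_e; apply/negbTE/negP => hd.
  by have := U_lt (isT : 0 < j.+1) hjj hd; rewrite hU ltnn.
have hadj : all (fun l : letter n => e cj.1 l.1) (take j.+1 (y :: c1)).
  apply/(all_nthP x0) => k; rewrite size_takel ?(ltnW hjj) // => hk.
  rewrite nth_take //.
  case: k hk => [|k] hk; first by rewrite /= e_sym.
  apply: ndep_e; apply/negbTE/negP => hd.
  have h1 := @U_lt _ _ _ x0 hk hjj.
  have h2 := hAll k.+1 (introT andP (conj (isT : 0 < k.+1) (ltn_trans hk hjj))).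
  rewrite dep_sym in hd.
  by have := leq_trans (h1 hd) h2; rewrite hU ltnn.
have hdec : y :: c1 = take j.+1 (y :: c1) ++ cj :: drop j.+2 (y :: c1).
  by rewrite /cj -(drop_nth x0 hjj) cat_take_drop.
have [hm hUp] := Up_adj (drop j.+2 (y :: c1)) hadj.
rewrite -hdec -(U_drop x0 hjj) -/cj -hU U0 in hUp.
rewrite -hdec in hm.
rewrite (mv_phieq _ hph) in hm; rewrite (Up_phieq _ hph) in hUp.
rewrite /= -/cj hE andbT.
case: (hmaxU cj hm) => [|[_ hle]]; first by rewrite hUp ltnn.
by rewrite ltn_neqAle hle (e_neq hE).
Qed.


Lemma ups_link_act a z V : e a z.1 -> size (ups [:: a] (act z V)) = size (ups [:: a] V).
Proof.
move=> ha; have hd : dep z.1 a = false by rewrite e_ndep // e_sym.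
case hc: (canc z V).
  have [Q [R [h1 h2 h3]]] := canc_decomp hc.
  by rewrite h3 h1 (ups_phieq _ (@phieq_move (inv_letter z) Q R h2)) /= hd /=.
by rewrite (ups_phieq _ (act_nocanc (negbT hc))) /= hd /=.
Qed.

Lemma ups_link_foldr a (xs : word n) V : all (fun l : letter n => e a l.1) xs ->
  size (ups [:: a] (foldr act V xs)) = size (ups [:: a] V).
Proof. elim: xs => //= z x IH /andP [h1 h2]; by rewrite ups_link_act // IH. Qed.

Lemma reduced_drop c i : reduced c -> reduced (drop i c).
Proof. rewrite -{1}(cat_take_drop i c); exact: reduced_cat. Qed.

Lemma RC c x0 i : reduced c -> i < size c -> rc_entry e c x0 i (U c i).
Proof.
move=> hr hi; rewrite (U_drop x0 hi).
set z := nth x0 c i; set T := drop i.+1 c.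
have hd : drop i c = z :: T by rewrite /z /T -drop_nth.
split.
  exists (downs [:: z.1] T), (ups [:: z.1] T); split => //.
  - rewrite /link_word; apply: downs_link; by rewrite inE.
  - rewrite hd; apply: comm_raag; apply: phieq_comm; exact: phieq_split.
move=> m [x [y [hl hs hrq]]]; rewrite -hs {hs}.
rewrite hd in hrq.
have hrT : reduced (z :: T) by rewrite -hd; exact: reduced_drop.
have h1 := NF_raag hrq; rewrite NF_cat in h1.
have h1' : phieq (z :: T) (foldr act (act z (NF y)) x).
  exact: phieq_trans (phieq_sym (NF_red hrT)) h1.
have g1 : size (ups [:: z.1] (z :: T)) = (size (ups [:: z.1] T)).+1.
  rewrite /= dep_refl /=; congr S; congr size; apply: ups_eqi => t; by rewrite !inE orbb.
rewrite -ltnS -g1 (ups_phieq _ h1') ups_link_foldr //.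
apply: leq_trans (size_ups_le _ _) _; rewrite size_act.
have := NF_size_le y; case: (canc z _) => h /=; lia.
Qed.

Lemma f_eq c f : reduced c -> rc_vector e c f -> forall i, i < size c -> nth 0 f i = U c i.
Proof.
move=> hr [hs hf] i hi.
case: c hr hs hf hi => [|x0 c'] // hr hs hf hi.
have h1 := hf x0 i hi; have h2 := RC x0 hr hi.
apply/eqP; rewrite eqn_leq (h1.2 _ h2.1) (h2.2 _ h1.1) //.
Qed.

Lemma canonical_sorted w c : canonical_expr e w c -> reduced c /\ sortedU c.
Proof.
case=> _ [hg [f [hrc [hA hB]]]]; have hr := geodesic_reduced hg.
split => //; split.
  move=> i j /andP [hij hj]; have hi := ltn_trans hij hj.
  rewrite -(f_eq hr hrc hi) -(f_eq hr hrc hj); apply: hA; by rewrite hij hj.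
move=> x0 i j /andP [hij hj] hU; have hi := ltn_trans hij hj.
apply: hB; first by rewrite hij hj.
by rewrite (f_eq hr hrc hi) (f_eq hr hrc hj).
Qed.

Lemma main_sec w : exists! c : word n, canonical_expr e w c.
Proof.
have [c [hc hs]] := exists_sorted (NF w).
have hcw : raag_eq e c w.
  exact: rst_trans (comm_raag (phieq_comm hc)) (NF_raag_eq w).
have hg : geodesic e c.
  move=> d hd; rewrite (phieq_size hc).
  apply: (reduced_geodesic (NF_reduced w)).
  exact: rst_trans hd (comm_raag (phieq_comm hc)).
have hr := geodesic_reduced hg.
exists c; split.
  split => //; split => //.
  exists (mkseq (U c) (size c)); split; [split|split].
  - by rewrite size_mkseq.
  - move=> x0 i hi; rewrite nth_mkseq //; exact: RC.
  - move=> i j /andP [hij hj]; have hi := ltn_trans hij hj.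
    rewrite !nth_mkseq //; apply: hs.1; by rewrite hij hj.
  - move=> x0 i j /andP [hij hj]; have hi := ltn_trans hij hj.
    rewrite !nth_mkseq // => hU; apply: hs.2 => //; by rewrite hij hj.
move=> c' hc'.
have [hr' hs'] := canonical_sorted hc'.
apply: uniq_sorted => //.
have h0 : raag_eq e c c'.
  apply: rst_trans hcw _; apply: rst_sym; exact: hc'.1.
have h := NF_raag h0.
exact: phieq_trans (phieq_sym (NF_red hr)) (phieq_trans h (NF_red hr')).
Qed.

End RA.

Theorem lemma3p2 (n : nat) (e : rel 'I_n)
  (e_sym : symmetric e) (e_irr : irreflexive e) (w : word n) :
  exists! c : word n, canonical_expr e w c.
Proof. exact: main_sec. Qed.
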